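(* Every $T_1$ fair topological space is a D-space.
   Context: A topological space $(X,\tau)$ is fair if for every collection $\mathcal D$ of closed discrete subsets of $X$ that is linearly ordered by inclusion (nested), if $\bigcup\mathcal D$ is discrete then $\bigcup\mathcal D$ is closed. An open neighborhood assignment is a function $N:X\to\tau$ with $x\in N(x)$ for all $x$. $X$ is a D-space if for every open neighborhood assignment $N$ there is a closed discrete $D\subseteq X$ with $\bigcup_{d\in D}N(d)=X$. *)

(* Defs.v *)
From HB Require Import structures.
From mathcomp Require Import all_boot all_order all_algebra.
From mathcomp Require Import all_classical all_reals all_analysis.
Set Implicit Arguments. Unset Strict Implicit. Unset Printing Implicit Defensive.
Local Open Scope classical_set_scope.

Definition discrete_subset {X : topologicalType} (A : set X) : Prop :=
  forall x, A x -> exists U : set X, [/\ open U, U x & U `&` A = [set x]].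

Definition closed_discrete {X : topologicalType} (A : set X) : Prop :=
  closed A /\ discrete_subset A.

Definition nested {X : Type} (D : set (set X)) : Prop :=
  forall A B, D A -> D B -> A `<=` B \/ B `<=` A.

Definition fair_space (X : topologicalType) : Prop :=
  forall D : set (set X),
    (forall A, D A -> closed_discrete A) -> nested D ->
    discrete_subset (\bigcup_(A in D) A) -> closed (\bigcup_(A in D) A).

Definition open_nbhd_assignment {X : topologicalType} (N : X -> set X) : Prop :=
  forall x, open (N x) /\ N x x.

Definition D_space (X : topologicalType) : Prop :=
  forall N : X -> set X, open_nbhd_assignment N ->
    exists D : set X, closed_discrete D /\ \bigcup_(d in D) N d = setT.

(* Main.v *)
Require Import Defs.
From mathcomp Require Import all_boot all_order all_algebra.
From mathcomp Require Import all_classical all_reals all_analysis.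
Local Open Scope classical_set_scope.

Section S.
Variable X : topologicalType.
Variable N : X -> set X.
Hypothesis HN : open_nbhd_assignment N.

Definition ext (D E : set X) : Prop :=
  D `<=` E /\ forall x, E x -> ~ D x -> forall d, D d -> ~ N d x.

Lemma ext_refl D : ext D D.
Proof. by split=> // x Ex nDx. Qed.

Lemma ext_trans D E F : ext D E -> ext E F -> ext D F.
Proof.
move=> [DE hDE] [EF hEF]; split; first by move=> z /DE /EF.
move=> x Fx nDx d Dd.
have [Ex|nEx] := pselect (E x).
  exact: hDE.
exact: (hEF x Fx nEx d (DE _ Dd)).
Qed.

End S.

Theorem mainTheorem3 (X : topologicalType) :
  accessible_space X -> fair_space X -> D_space X.
Proof.
move=> T1 fair N HN.
pose T := {D : set X | closed_discrete D}.
pose R (a b : T) : bool := `[< @ext X N (sval a) (sval b) >].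
have [t tmax] : exists t, forall s, R t s -> s = t.
  apply: (@Zorn T R).
  - by move=> a; apply/asboolP; exact: (@ext_refl X N).
  - by move=> a b c /asboolP ab /asboolP bc; apply/asboolP; exact: (@ext_trans X N _ _ _ ab bc).
  - move=> [A PA] [B PB] /asboolP [AB _] /asboolP [BA _].
    have E : A = B by apply/seteqP; split.
    subst B; congr exist; exact: Prop_irrelevance.
  - move=> A Atot.
    pose U := \bigcup_(B in sval @` A) B.
    have Udisc : discrete_subset U.
      move=> d [_ [a Aa <-] ad].
      have [_ /(_ d ad) [V [oV Vd VE]]] := svalP a.
      exists (V `&` N d); split.
      + by apply: openI => //; exact: (HN d).1.
      + by split => //; exact: (HN d).2.
      apply/seteqP; split => y /=.
        move=> [[Vy Ndy] [_ [b Ab <-] by_]].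
        have [/asboolP [ab hab]|/asboolP [ba hba]] := Atot a b Aa Ab.
          have [ay|nay] := pselect (sval a y).
            by have : (V `&` sval a) y by []; rewrite VE.
          by exfalso; exact: (hab y by_ nay d ad Ndy).
        have : (V `&` sval a) y by split => //; exact: ba.
        by rewrite VE.
      move=> ->; split; first by split => //; exact: (HN d).2.
      by exists (sval a) => //; exists a.
    have Uclosed : closed U.
      apply: fair => //.
        by move=> _ [a _ <-]; exact: svalP.
      move=> _ _ [a Aa <-] [b Ab <-].
      by have [/asboolP [ab _]|/asboolP [ba _]] := Atot a b Aa Ab; [left|right].
    exists (exist _ U (conj Uclosed Udisc)) => a Aa; apply/asboolP; split.
      by move=> z az; exists (sval a) => //; exists a.
    move=> x [_ [b Ab <-] bx] nax d ad.
    have [/asboolP [ab hab]|/asboolP [ba hba]] := Atot a b Aa Ab.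
      exact: hab.
    by exfalso; apply: nax; exact: ba.
exists (sval t); split; first exact: svalP.
apply/seteqP; split => // x _.
apply: contrapT => nx.
have nN : forall d, sval t d -> ~ N d x by move=> d td Ndx; apply: nx; exists d.
have nt : ~ sval t x by move=> tx; exact: (nN x tx (HN x).2).
have [tcl tdisc] := svalP t.
have P' : closed_discrete (sval t `|` [set x]).
  split; first by apply: closedU => //; exact: accessible_closed_set1.
  move=> y [ty|->].
    have [V [oV Vy VE]] := tdisc y ty.
    have yx : y <> x by move=> yx; apply: nt; rewrite -yx.
    exists (V `&` ~` [set x]); split.
    + by apply: openI => //; apply: closed_openC; exact: accessible_closed_set1.
    + by split.
    apply/seteqP; split => z /=.
      move=> [[Vz nzx] [tz|zx //]].
      by have : (V `&` sval t) z by []; rewrite VE.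
    by move=> ->; split; [split|left].
  exists (~` sval t); split.
  + exact: closed_openC.
  + exact: nt.
  apply/seteqP; split => z /=.
    by move=> [ntz [tz|->]].
  by move=> ->; split; [|right].
have := tmax (exist _ _ P').
have Rt : R t (exist _ _ P').
  apply/asboolP; split; first by move=> z tz; left.
  by move=> z [tz|->] ntz d td //; exact: nN.
move=> /(_ Rt) E.
apply: nt; rewrite -E /=; by right.
Qed.
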